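(* In the standing setup, assume $A$ is generic and $\det f_0'(x)$ is not identically zero. Then $p_0=q_1+q_2+q_3$. Define $s_1=1-2\varepsilon^2(q_2+q_3)$, $s_2=1-2\varepsilon^2(q_1+q_3)$, $s_3=1-2\varepsilon^2(q_1+q_2)$, $s_0=1$, and (for $\varepsilon\ne0$) $P_0=\tfrac14\big(\tfrac1{s_0}+\tfrac1{s_1}+\tfrac1{s_2}+\tfrac1{s_3}\big)$, $Q_1=\tfrac1{4\varepsilon^2}\big(-\tfrac1{s_0}-\tfrac1{s_1}+\tfrac1{s_2}+\tfrac1{s_3}\big)$, $Q_2=\tfrac1{4\varepsilon^2}\big(-\tfrac1{s_0}+\tfrac1{s_1}-\tfrac1{s_2}+\tfrac1{s_3}\big)$, $Q_3=\tfrac1{4\varepsilon^2}\big(-\tfrac1{s_0}+\tfrac1{s_1}+\tfrac1{s_2}-\tfrac1{s_3}\big)$. Then at every $x$ with $s_1(x,\varepsilon)s_2(x,\varepsilon)s_3(x,\varepsilon)\neq0$, the matrix $\Pi(x)=J-\varepsilon^2(f_0'(x))^2J$ is invertible and $$\Pi(x)^{-1}=-P_0(x,\varepsilon)J-\varepsilon^2\sum_{i=1}^3Q_i(x,\varepsilon)B_iJ.$$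
   Context: Standing setup: $J=\begin{pmatrix}0&I_3\\-I_3&0\end{pmatrix}$ ($6\times6$). $A$ is a fixed real $6\times 6$ skew-Hamiltonian matrix ($A^{\rm T}J=JA$). $H_0$ is a homogeneous cubic polynomial on $\mathbb R^6$ with $A\nabla^2H_0(x)=\nabla^2H_0(x)A^{\rm T}$ for all $x$ ($\nabla^2$ = Hesse matrix), $f_0=J\nabla H_0$, with Jacobi matrix $f_0'$. Genericity: the characteristic polynomial of $A$ (a square of a cubic) has three pairwise distinct roots $\lambda_1,\lambda_2,\lambda_3$, each a double eigenvalue. $B_i=\alpha_iI+\beta_iA+\gamma_iA^2$ ($i=1,2,3$), where $\alpha_i+\beta_i\lambda+\gamma_i\lambda^2$ is the unique polynomial of degree $\le2$ equal to $-1$ at $\lambda_i$ and to $1$ at the other two eigenvalues. $p_0(x)=\tfrac18\operatorname{tr}(f_0'(x))^2$, $q_i(x)=\tfrac18\operatorname{tr}(B_i^{\rm T}(f_0'(x))^2)$. *)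

(* Defs.v *)
From HB Require Import structures.
From mathcomp Require Import all_boot all_order all_algebra.
Set Implicit Arguments. Unset Strict Implicit. Unset Printing Implicit Defensive.
Import Order.TTheory GRing.Theory Num.Theory.
Local Open Scope ring_scope.

Section Defs.
Variable F : numFieldType.

(* J = [[0, I_3], [-I_3, 0]] *)
Definition Jmx : 'M[F]_6 :=
  \matrix_(i < 6, j < 6)
    (if (i < 3)%N && (val j == (val i + 3)%N) then 1
     else if (3 <= i)%N && (val i == (val j + 3)%N) then -1 else 0).

Definition skew_hamiltonian (A : 'M[F]_6) : Prop := A^T *m Jmx = Jmx *m A.

Definition cubic (c : 'I_6 -> 'I_6 -> 'I_6 -> F) (x : 'cV[F]_6) : F :=
  \sum_(i < 6) \sum_(j < 6) \sum_(k < 6) c i j k * x i 0 * x j 0 * x k 0.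

(* Its Hesse matrix (second partial derivatives, computed formally). *)
Definition hess (c : 'I_6 -> 'I_6 -> 'I_6 -> F) (x : 'cV[F]_6) : 'M[F]_6 :=
  \matrix_(a < 6, b < 6)
    \sum_(k < 6) x k 0 * (c a b k + c b a k + c a k b + c b k a + c k a b + c k b a).

(* Jacobi matrix of f0 = J grad H0 *)
Definition f0' c x : 'M[F]_6 := Jmx *m hess c x.

Definition p0 c x : F := 8^-1 * \tr (f0' c x *m f0' c x).
Definition qq (B : 'M[F]_6) c x : F := 8^-1 * \tr (B^T *m (f0' c x *m f0' c x)).

Definition Bmx (A : 'M[F]_6) (al be ga : F) : 'M[F]_6 :=
  al%:M + be *: A + ga *: (A *m A).

Definition Pimx c (eps : F) x : 'M[F]_6 :=
  Jmx - eps ^+ 2 *: (f0' c x *m f0' c x *m Jmx).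

End Defs.
Arguments Jmx {F}.

(* Main.v *)
Require Import Defs.
From HB Require Import structures.
From mathcomp Require Import all_boot all_order all_algebra.
From mathcomp Require Import ring zify.
Import Order.TTheory GRing.Theory Num.Theory.
Local Open Scope ring_scope.

Section SA.
Variable F : numFieldType.
Lemma sum6 (G : 'I_6 -> F) : \sum_(i < 6) G i =
  G (@Ordinal 6 0 isT) + G (@Ordinal 6 1 isT) + G (@Ordinal 6 2 isT) +
  G (@Ordinal 6 3 isT) + G (@Ordinal 6 4 isT) + G (@Ordinal 6 5 isT).
Proof.
rewrite !big_ord_recr big_ord0 /= ?add0r.
by repeat congr (_ + _); congr G; apply: val_inj.
Qed.
Definition mk (f : nat -> nat -> F) : 'M[F]_6 := \matrix_(i<6,j<6) f i j.
Lemma mk_mul f g : mk f *m mk g = mk (fun i j => f i 0%N * g 0%N j + f i 1%N * g 1%N j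
  + f i 2%N * g 2%N j + f i 3%N * g 3%N j + f i 4%N * g 4%N j + f i 5%N * g 5%N j).
Proof. by apply/matrixP=> i j; rewrite !mxE sum6 !mxE. Qed.
Lemma mk_tr f : \tr (mk f) = f 0%N 0%N + f 1%N 1%N + f 2%N 2%N + f 3%N 3%N + f 4%N 4%N + f 5%N 5%N.
Proof. by rewrite /mxtrace sum6 !mxE. Qed.
Definition skf (P : nat -> nat -> F) (q01 q02 q12 r01 r02 r12 : F) (i j : nat) : F :=
 match i, j with
 | 0,0 => P 0 0 | 0,1 => P 0 1 | 0,2 => P 0 2
 | 1,0 => P 1 0 | 1,1 => P 1 1 | 1,2 => P 1 2
 | 2,0 => P 2 0 | 2,1 => P 2 1 | 2,2 => P 2 2
 | 0,3 => 0 | 0,4 => q01 | 0,5 => q02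
 | 1,3 => -q01 | 1,4 => 0 | 1,5 => q12
 | 2,3 => -q02 | 2,4 => -q12 | 2,5 => 0
 | 3,0 => 0 | 3,1 => r01 | 3,2 => r02
 | 4,0 => -r01 | 4,1 => 0 | 4,2 => r12
 | 5,0 => -r02 | 5,1 => -r12 | 5,2 => 0
 | 3,3 => P 0 0 | 3,4 => P 1 0 | 3,5 => P 2 0
 | 4,3 => P 0 1 | 4,4 => P 1 1 | 4,5 => P 2 1
 | 5,3 => P 0 2 | 5,4 => P 1 2 | 5,5 => P 2 2
 | _,_ => 0 end.

Lemma neg_self (x : F) : - x = x -> x = 0.
Proof.
move=> h; apply/eqP; have : x *+ 2 == 0 by rewrite mulr2n -{1}h addNr.
by rewrite mulrn_eq0.
Qed.

Lemma mk_inj f g : mk f = mk g -> forall i j, (i < 6)%N -> (j < 6)%N -> f i j = g i j.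
Proof.
move=> h i j Hi Hj.
by have := congr1 (fun M : 'M[F]_6 => M (Ordinal Hi) (Ordinal Hj)) h; rewrite !mxE.
Qed.

Definition jf (i j : nat) : F :=
  if (i < 3)%N && (j == (i + 3)%N) then 1
  else if (3 <= i)%N && (i == (j + 3)%N) then -1 else 0.

Lemma Jmk : Jmx = mk jf.
Proof. by apply/matrixP => i j; rewrite !mxE. Qed.

Lemma mk_trmx f : (mk f)^T = mk (fun i j => f j i).
Proof. by apply/matrixP => i j; rewrite !mxE. Qed.

Ltac close := rewrite /jf /= ?(mulr0,mul0r,mulr1,mul1r,add0r,addr0,mulrN1,mulN1r);
  let e := fresh "e" in move=> e; first [ by rewrite e | by rewrite -e | by rewrite e opprK
    | by rewrite -e opprK | by apply: neg_self; exact: e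
    | by apply: neg_self; exact: esym e ].

Lemma skh_mk (A : 'M[F]_6) : skew_hamiltonian A ->
  let a := fun i j : nat => A (inord i) (inord j) in
  A = mk (skf a (a 0 4)%N (a 0 5)%N (a 1 5)%N (a 3 1)%N (a 3 2)%N (a 4 2)%N).
Proof.
move=> h a.
have Aa : A = mk a by apply/matrixP => i j; rewrite !mxE /a !inord_val.
rewrite /skew_hamiltonian Aa Jmk mk_trmx !mk_mul in h.
have E := mk_inj _ _ h.
rewrite {1}Aa; apply/matrixP => i j; rewrite !mxE.
move: i j => [[|[|[|[|[|[|i]]]]]] Hi] [[|[|[|[|[|[|j]]]]]] Hj] //=.
- by have := E 3 3 isT isT; close.
- by have := E 4 3 isT isT; close.
- by have := E 4 4 isT isT; close.
- by have := E 5 3 isT isT; close.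
- by have := E 5 4 isT isT; close.
- by have := E 5 5 isT isT; close.
- by have := E 0 0 isT isT; close.
- by have := E 0 3 isT isT; close.
- by have := E 0 4 isT isT; close.
- by have := E 0 5 isT isT; close.
- by have := E 1 0 isT isT; close.
- by have := E 1 1 isT isT; close.
- by have := E 1 3 isT isT; close.
- by have := E 1 4 isT isT; close.
- by have := E 1 5 isT isT; close.
- by have := E 2 0 isT isT; close.
- by have := E 2 1 isT isT; close.
- by have := E 2 2 isT isT; close.
- by have := E 2 3 isT isT; close.
- by have := E 2 4 isT isT; close.
- by have := E 2 5 isT isT; close.
Qed.

Lemma cubic_skf P q01 q02 q12 r01 r02 r12 :
  let A : 'M[F]_6 := mk (skf P q01 q02 q12 r01 r02 r12) in
  let t1 := \tr A in let t2 := \tr (A *m A) in let t3 := \tr (A *m A *m A) in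
  ((48%:M *m A + (- (24 * t1))%:M) *m A + (6 * (t1^+2 - 2 * t2))%:M) *m A
   + (- (t1^+3 - 6*t1*t2 + 8*t3))%:M = 0.
Proof.
move=> A t1 t2 t3.
rewrite !mulmxDl !mul_scalar_mx -!scalemxAl.
rewrite /t1 /t2 /t3 /A !mk_mul !mk_tr /=.
apply/matrixP => i j; rewrite !mxE.
move: i j => [[|[|[|[|[|[|i]]]]]] Hi] [[|[|[|[|[|[|j]]]]]] Hj] //=.
all: ring.
Qed.

End SA.

Section SB.
Variable F : numFieldType.

Lemma horner3 (A : 'M[F]_6) (a b c d : F) :
  horner_mx A (((a%:P * 'X + b%:P) * 'X + c%:P) * 'X + d%:P) =
  ((a%:M *m A + b%:M) *m A + c%:M) *m A + d%:M.
Proof. by rewrite !(rmorphD, rmorphM) /= !horner_mx_C !horner_mx_X. Qed.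

Lemma cubic_ann (A : 'M[F]_6) : skew_hamiltonian A ->
  exists c : {poly F}, [/\ c != 0, (size c <= 4)%N & horner_mx A c = 0].
Proof.
move=> hA; have eA := @skh_mk _ _ hA.
set t1 := \tr A; set t2 := \tr (A *m A); set t3 := \tr (A *m A *m A).
exists (((48%:P * 'X + (- (24 * t1))%:P) * 'X + (6 * (t1^+2 - 2 * t2))%:P) * 'X
   + (- (t1^+3 - 6*t1*t2 + 8*t3))%:P).
have h48 : (48 : F) != 0 by rewrite pnatr_eq0.
have s1 : size (48%:P * 'X + (- (24 * t1))%:P : {poly F}) = 2%N.
  by rewrite size_MXaddC polyC_eq0 (negbTE h48) size_polyC h48.
have s2 : size ((48%:P * 'X + (- (24 * t1))%:P) * 'X + (6 * (t1^+2 - 2 * t2))%:P : {poly F}) = 3%N.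
  have n0 : (48%:P * 'X + (- (24 * t1))%:P : {poly F}) != 0 by rewrite -size_poly_eq0 s1.
  by rewrite size_MXaddC (negbTE n0) s1.
have s3 : size (((48%:P * 'X + (- (24 * t1))%:P) * 'X + (6 * (t1^+2 - 2 * t2))%:P) * 'X
   + (- (t1^+3 - 6*t1*t2 + 8*t3))%:P : {poly F}) = 4%N.
  have n0 : ((48%:P * 'X + (- (24 * t1))%:P) * 'X + (6 * (t1^+2 - 2 * t2))%:P : {poly F}) != 0 by rewrite -size_poly_eq0 s2.
  by rewrite size_MXaddC (negbTE n0) s2.
split; first by rewrite -size_poly_eq0 s3.
  by rewrite s3.
rewrite horner3 /t1 /t2 /t3 eA.
exact: cubic_skf.
Qed.

Lemma annih (A : 'M[F]_6) (lam : 'I_3 -> F) (c : {poly F}) :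
  char_poly A = \prod_(i < 3) ('X - (lam i)%:P) ^+ 2 -> injective lam ->
  c != 0 -> (size c <= 4)%N -> horner_mx A c = 0 ->
  forall p, (forall j, p.[lam j] = 0) -> horner_mx A p = 0.
Proof.
move=> hc inj cn0 sc hAc p hp.
set rs := [:: lam 0; lam 1; lam 2].
set m := \prod_(z <- rs) ('X - z%:P).
have rootc : forall j, root (char_poly A) (lam j).
  move=> j; rewrite hc /root horner_prod; apply/prodf_eq0; exists j => //.
  by rewrite horner_exp hornerXsubC subrr expr0n.
have urs : uniq_roots rs.
  by rewrite uniq_rootsE /rs /= !inE !(inj_eq inj).
have mdvd : forall q, (forall j, root q (lam j)) -> m %| q.
  move=> q hq; have hall : all (root q) rs by rewrite /rs /= !hq.
  have [q' ->] := uniq_roots_prod_XsubC hall urs.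
  exact: dvdp_mulIr.
have pAn0 : mxminpoly A != 0 := monic_neq0 (mxminpoly_monic A).
have m1 : m %| mxminpoly A by apply: mdvd => j; rewrite root_mxminpoly rootc.
have m2 : mxminpoly A %| c by apply: mxminpoly_min.
have sm : size m = 4%N by rewrite /m size_prod_XsubC.
have e : size m == size (mxminpoly A).
  rewrite eqn_leq dvdp_leq // sm; apply: leq_trans sc; exact: dvdp_leq.
rewrite (dvdp_size_eqp m1) in e; case/andP: e => _ e.
apply/mxminpoly_minP; apply: dvdp_trans e _; apply: mdvd => j.
by rewrite /root hp.
Qed.

End SB.

Set Implicit Arguments. Unset Strict Implicit. Unset Printing Implicit Defensive.

Section SC.
Variable F : numFieldType.

Lemma idem_fact n (P : 'M[F]_n) : P *m P = P ->
  exists U : 'M_(n, \rank P), exists V : 'M_(\rank P, n), U *m V = P /\ V *m U = 1%:M.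
Proof.
move=> hP.
set V := row_base P; exists (P *m pinvmx V), V.
have PV : (P <= V)%MS by rewrite /V eq_row_base.
have VP : (V <= P)%MS by rewrite /V eq_row_base.
split; first exact: mulmxKpV.
apply: (row_free_inj (row_base_free P)); rewrite mul1mx -mulmxA (mulmxKpV PV).
rewrite -{1}(mulmxKpV VP) -mulmxA hP.
exact: mulmxKpV.
Qed.

Lemma tr_idem n (P : 'M[F]_n) : P *m P = P -> \tr P = (\rank P)%:R.
Proof.
move=> /idem_fact [U [V [hUV h]]].
by rewrite -{1}hUV mxtrace_mulC h mxtrace1.
Qed.

Lemma even_aux n r (P K : 'M[F]_n) (U : 'M_(n, r)) (V : 'M_(r, n)) :
  U *m V = P -> V *m U = 1%:M -> P *m P = P -> K *m K = - 1%:M -> K^T = - K ->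
  P^T *m K = K *m P -> ~~ odd r.
Proof.
move=> hUV hVU hP hK hKt hPK.
set W := U^T *m K *m U.
have h1 : V^T *m W *m V = K *m P.
  have : (U *m V)^T *m K *m (U *m V) = K *m P by rewrite hUV hPK -mulmxA hP.
  by rewrite trmx_mul !mulmxA /W.
have h2 : V^T *m W = K *m U.
  have := congr1 (mulmx^~ U) h1; rewrite /= -(mulmxA (V^T *m W)) hVU mulmx1 => ->.
  by rewrite -hUV -!mulmxA hVU mulmx1.
have h3 : (- (V *m K *m V^T)) *m W = 1%:M.
  by rewrite mulNmx -(mulmxA (V *m K)) h2 mulmxA -(mulmxA V K K) hK mulmxN mulmx1 mulNmx opprK hVU.
have [_ Wu] := mulmx1_unit h3.
have dW : \det W != 0 by rewrite -unitfE -unitmxE.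
have hWt : W^T = - W by rewrite /W !trmx_mul trmxK hKt mulNmx mulmxN mulmxA.
apply/negP => odd_r.
have : \det W = - \det W.
  by rewrite -{1}det_tr hWt -scaleN1r detZ -signr_odd odd_r expr1 mulN1r.
move/eqP; rewrite -subr_eq0 opprK -mulr2n mulrn_eq0 /=.
by rewrite (negbTE dW).
Qed.

Lemma even_rank n (P K : 'M[F]_n) : P *m P = P -> K *m K = - 1%:M -> K^T = - K ->
  P^T *m K = K *m P -> ~~ odd (\rank P).
Proof.
move=> hP hK hKt hPK; have [U [V [hUV hVU]]] := idem_fact hP.
exact: even_aux hUV hVU hP hK hKt hPK.
Qed.

Lemma sum2 (G : 'I_2 -> F) : \sum_(i < 2) G i = G (@Ordinal 2 0 isT) + G (@Ordinal 2 1 isT).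
Proof.
rewrite !big_ord_recr big_ord0 /= ?add0r.
by repeat congr (_ + _); congr G; apply: val_inj.
Qed.

Lemma sq2 (Z : 'M[F]_2) : \tr Z = 0 -> Z *m Z = (2^-1 * \tr (Z *m Z)) *: 1%:M.
Proof.
pose z := fun i j : nat => Z (inord i) (inord j).
have eZ : Z = \matrix_(i < 2, j < 2) z i j by apply/matrixP => i j; rewrite !mxE /z !inord_val.
rewrite eZ /mxtrace !sum2 !mxE /= !sum2 !mxE /= => h.
have e : z 1%N 1%N = - z 0%N 0%N by apply/eqP; rewrite -addr_eq0 addrC h.
apply/matrixP => i j; rewrite !mxE !sum2 !mxE /=.
move: i j => [[|[|i]] Hi] [[|[|j]] Hj] //=; rewrite e.
all: have t2 : (2 : F) != 0 by rewrite pnatr_eq0.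
all: field.
all: done.
Qed.

Lemma rank2_aux n r (P N : 'M[F]_n) (U : 'M_(n, r)) (V : 'M_(r, n)) : r = 2%N ->
  U *m V = P -> V *m U = 1%:M -> N *m P = P *m N -> \tr (N *m P) = 0 ->
  N *m N *m P = (2^-1 * \tr (N *m N *m P)) *: P.
Proof.
move=> er; subst r => hUV hVU hNP htr.
set Z := V *m N *m U.
have tZ : \tr Z = 0.
  by rewrite /Z -mulmxA mxtrace_mulC -mulmxA hUV htr.
have e1 : U *m Z = N *m U.
  by rewrite /Z !mulmxA hUV -hNP -hUV -!mulmxA hVU mulmx1.
have e2 : Z *m Z = V *m (N *m N *m U).
  by rewrite {1}/Z -!mulmxA e1 !mulmxA.
have key : N *m N *m P = U *m (Z *m Z) *m V.
  by clearbody Z; rewrite !mulmxA e1 -(mulmxA N U Z) e1 !mulmxA -(mulmxA _ U V) hUV.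
rewrite {1}key sq2 // -scalemxAr -scalemxAl mulmx1; congr (_ *: _); last exact: hUV.
congr (_ * _).
by rewrite e2 mxtrace_mulC -[P]hUV !mulmxA.
Qed.

Lemma rank2 n (P N : 'M[F]_n) : P *m P = P -> \rank P = 2%N ->
  N *m P = P *m N -> \tr (N *m P) = 0 ->
  N *m N *m P = (2^-1 * \tr (N *m N *m P)) *: P.
Proof.
move=> hP hr; have [U [V [hUV hVU]]] := idem_fact hP.
exact: rank2_aux hr hUV hVU.
Qed.

End SC.

Section SD.
Variable F : numFieldType.

Ltac entring := apply/matrixP => ? ?; rewrite !mxE; ring.

Lemma comb3 (p0 p1 p2 : 'M[F]_6) (a0 a1 a2 c0 c1 c2 : F) :
  p0 *m p0 = p0 -> p1 *m p1 = p1 -> p2 *m p2 = p2 ->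
  p0 *m p1 = 0 -> p0 *m p2 = 0 -> p1 *m p0 = 0 -> p1 *m p2 = 0 ->
  p2 *m p0 = 0 -> p2 *m p1 = 0 ->
  (a0 *: p0 + a1 *: p1 + a2 *: p2) *m (c0 *: p0 + c1 *: p1 + c2 *: p2) =
  (a0 * c0) *: p0 + (a1 * c1) *: p1 + (a2 * c2) *: p2.
Proof.
move=> h00 h11 h22 h01 h02 h10 h12 h20 h21.
rewrite !mulmxDl !mulmxDr -!scalemxAl -!scalemxAr.
rewrite h00 h11 h22 h01 h02 h10 h12 h20 h21.
entring.
Qed.

Lemma final_alg (Jm N p0 p1 p2 B0 B1 B2 : 'M[F]_6) (mu0 mu1 mu2 e P0 Q1 Q2 Q3 : F) :
  p0 *m p0 = p0 -> p1 *m p1 = p1 -> p2 *m p2 = p2 ->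
  p0 *m p1 = 0 -> p0 *m p2 = 0 -> p1 *m p0 = 0 -> p1 *m p2 = 0 ->
  p2 *m p0 = 0 -> p2 *m p1 = 0 -> p0 + p1 + p2 = 1%:M ->
  B0 = 1%:M - 2 *: p0 -> B1 = 1%:M - 2 *: p1 -> B2 = 1%:M - 2 *: p2 ->
  N *m N = mu0 *: p0 + mu1 *: p1 + mu2 *: p2 -> Jm *m Jm = - 1%:M ->
  (1 - e * mu0) * (P0 + e * (- Q1 + Q2 + Q3)) = 1 ->
  (1 - e * mu1) * (P0 + e * (Q1 - Q2 + Q3)) = 1 ->
  (1 - e * mu2) * (P0 + e * (Q1 + Q2 - Q3)) = 1 ->
  (Jm - e *: (Jm *m (N *m N))) *m
    (- (P0 *: Jm) - e *: (Q1 *: (B0 *m Jm) + Q2 *: (B1 *m Jm) + Q3 *: (B2 *m Jm)))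
  = 1%:M.
Proof.
move=> h00 h11 h22 h01 h02 h10 h12 h20 h21 hs eB0 eB1 eB2 hN hJ c0 c1 c2.
have eX : - (P0 *: Jm) - e *: (Q1 *: (B0 *m Jm) + Q2 *: (B1 *m Jm) + Q3 *: (B2 *m Jm))
  = - ((P0 *: 1%:M + e *: (Q1 *: B0 + Q2 *: B1 + Q3 *: B2)) *m Jm).
  by rewrite mulmxDl -scalemxAl mul1mx -scalemxAl !mulmxDl -!scalemxAl opprD.
have eY : P0 *: 1%:M + e *: (Q1 *: B0 + Q2 *: B1 + Q3 *: B2) =
   (P0 + e * (- Q1 + Q2 + Q3)) *: p0 + (P0 + e * (Q1 - Q2 + Q3)) *: p1
   + (P0 + e * (Q1 + Q2 - Q3)) *: p2.
  by rewrite eB0 eB1 eB2 -hs; entring.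
have eD : Jm - e *: (Jm *m (N *m N)) = Jm *m
   ((1 - e * mu0) *: p0 + (1 - e * mu1) *: p1 + (1 - e * mu2) *: p2).
  have -> : (1 - e * mu0) *: p0 + (1 - e * mu1) *: p1 + (1 - e * mu2) *: p2
     = 1%:M - e *: (N *m N) by rewrite hN -hs; entring.
  by rewrite mulmxBr mulmx1 scalemxAr.
rewrite eX eY eD mulmxN mulmxA -(mulmxA Jm) comb3 // c0 c1 c2 !scale1r hs mulmx1 hJ opprK.
by [].
Qed.

End SD.

Section SE.
Variable F : numFieldType.

Lemma JJ : Jmx *m Jmx = - 1%:M :> 'M[F]_6.
Proof.
rewrite Jmk mk_mul; apply/matrixP => i j; rewrite !mxE.
move: i j => [[|[|[|[|[|[|i]]]]]] Hi] [[|[|[|[|[|[|j]]]]]] Hj] //=; rewrite /jf /=.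
all: ring.
Qed.

Lemma Jt : (Jmx : 'M[F]_6)^T = - Jmx.
Proof.
rewrite Jmk mk_trmx; apply/matrixP => i j; rewrite !mxE.
move: i j => [[|[|[|[|[|[|i]]]]]] Hi] [[|[|[|[|[|[|j]]]]]] Hj] //=; rewrite /jf /=.
all: ring.
Qed.

Lemma hess_sym (c : 'I_6 -> 'I_6 -> 'I_6 -> F) x : (hess c x)^T = hess c x.
Proof.
apply/matrixP => i j; rewrite !mxE; apply: eq_bigr => k _; congr (_ * _); ring.
Qed.

Definition hpi (Bm : 'M[F]_6) := 2^-1 *: (1%:M - Bm).

Lemma two_neq0 : (2 : F) != 0. Proof. by rewrite pnatr_eq0. Qed.

Lemma L1 (Bm : 'M[F]_6) : Bm *m Bm = 1%:M -> hpi Bm *m hpi Bm = hpi Bm.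
Proof.
move=> h; rewrite /hpi -scalemxAl -scalemxAr scalerA mulmxBl !mulmxBr !mul1mx !mulmx1 h.
have t := two_neq0.
by apply/matrixP => a b; rewrite !mxE; field.
Qed.

Lemma L2 (B1 B2 : 'M[F]_6) : (1%:M - B1) *m (1%:M - B2) = 0 -> hpi B1 *m hpi B2 = 0.
Proof. by move=> h; rewrite /hpi -scalemxAl -scalemxAr h !scaler0. Qed.

Lemma L3 (B0 B1 B2 : 'M[F]_6) : B0 + B1 + B2 = 1%:M -> hpi B0 + hpi B1 + hpi B2 = 1%:M.
Proof.
move=> h; have e : B2 = 1%:M - B0 - B1 by rewrite -h; apply/matrixP => a b; rewrite !mxE; ring.
rewrite /hpi e; have t := two_neq0.
by apply/matrixP => a b; rewrite !mxE; field.
Qed.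

Lemma L4 (Bm : 'M[F]_6) : Bm = 1%:M - 2 *: hpi Bm.
Proof.
rewrite /hpi; have t := two_neq0.
by apply/matrixP => a b; rewrite !mxE; field.
Qed.

Lemma L5 (Bm J : 'M[F]_6) : Bm^T *m J = J *m Bm -> (hpi Bm)^T *m J = J *m hpi Bm.
Proof.
move=> h; rewrite /hpi linearZ /= linearB /= trmx1 -scalemxAl -scalemxAr mulmxBl mulmxBr.
by rewrite mul1mx mulmx1 h.
Qed.

Lemma L6 (Bm N : 'M[F]_6) : Bm *m N = N *m Bm -> N *m hpi Bm = hpi Bm *m N.
Proof.
move=> h; rewrite /hpi -scalemxAl -scalemxAr mulmxBl mulmxBr.
by rewrite mul1mx mulmx1 h.
Qed.

Lemma scal (e s1 s2 s3 : F) : e != 0 -> s1 != 0 -> s2 != 0 -> s3 != 0 ->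
  let s0 : F := 1 in
  let P0 := 4^-1 * (s0^-1 + s1^-1 + s2^-1 + s3^-1) in
  let Q1 := (4 * e ^+ 2)^-1 * (- s0^-1 - s1^-1 + s2^-1 + s3^-1) in
  let Q2 := (4 * e ^+ 2)^-1 * (- s0^-1 + s1^-1 - s2^-1 + s3^-1) in
  let Q3 := (4 * e ^+ 2)^-1 * (- s0^-1 + s1^-1 + s2^-1 - s3^-1) in
  [/\ s1 * (P0 + e ^+ 2 * (- Q1 + Q2 + Q3)) = 1,
      s2 * (P0 + e ^+ 2 * (Q1 - Q2 + Q3)) = 1 &
      s3 * (P0 + e ^+ 2 * (Q1 + Q2 - Q3)) = 1].
Proof.
move=> he h1 h2 h3 s0 P0 Q1 Q2 Q3.
have h4 : (4 : F) != 0 by rewrite pnatr_eq0.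
rewrite /P0 /Q1 /Q2 /Q3 /s0.
by split; field; rewrite h1 h2 h3 he.
Qed.

End SE.

Unset Implicit Arguments. Set Strict Implicit.

Theorem mainTheorem15 (F : numFieldType) (A : 'M[F]_6)
  (c : 'I_6 -> 'I_6 -> 'I_6 -> F)
  (lam : 'I_3 -> F) (al be ga : 'I_3 -> F) :
  skew_hamiltonian A ->
  (forall x : 'cV[F]_6, A *m hess c x = hess c x *m A^T) ->
  (* genericity: char. polynomial = prod (X - lam_i)^2, lam_i pairwise distinct *)
  char_poly A = \prod_(i < 3) ('X - (lam i)%:P) ^+ 2 ->
  injective lam ->
  (* al_i + be_i t + ga_i t^2 is -1 at lam_i and 1 at the other eigenvalues *)
  (forall i j : 'I_3,
      al i + be i * lam j + ga i * lam j ^+ 2 = (if i == j then -1 else 1)) ->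
  (exists x0 : 'cV[F]_6, \det (f0' c x0) != 0) ->
  let B := fun i => Bmx A (al i) (be i) (ga i) in
  let q := fun i x => qq (B i) c x in
  (forall x : 'cV[F]_6, p0 c x = q 0 x + q 1 x + q 2 x) /\
  (forall (eps : F) (x : 'cV[F]_6), eps != 0 ->
     let s0 : F := 1 in
     let s1 := 1 - 2 * eps ^+ 2 * (q 1 x + q 2 x) in
     let s2 := 1 - 2 * eps ^+ 2 * (q 0 x + q 2 x) in
     let s3 := 1 - 2 * eps ^+ 2 * (q 0 x + q 1 x) in
     let P0 := 4^-1 * (s0^-1 + s1^-1 + s2^-1 + s3^-1) in
     let Q1 := (4 * eps ^+ 2)^-1 * (- s0^-1 - s1^-1 + s2^-1 + s3^-1) in
     let Q2 := (4 * eps ^+ 2)^-1 * (- s0^-1 + s1^-1 - s2^-1 + s3^-1) in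
     let Q3 := (4 * eps ^+ 2)^-1 * (- s0^-1 + s1^-1 + s2^-1 - s3^-1) in
     s1 * s2 * s3 != 0 ->
     Pimx c eps x \in unitmx /\
     invmx (Pimx c eps x) =
       - (P0 *: Jmx)
       - eps ^+ 2 *: (Q1 *: (B 0 *m Jmx) + Q2 *: (B 1 *m Jmx) + Q3 *: (B 2 *m Jmx))).
Proof.
move=> hSH hHess hchar inj hval _ B q.
have JJ' := @JJ F; have Jt' := @Jt F.
pose bp i := (al i)%:P + (be i)%:P * 'X + (ga i)%:P * ('X * 'X).
have hB : forall i, horner_mx A (bp i) = B i.
  move=> i; rewrite /bp !(rmorphD, rmorphM) /= !horner_mx_C horner_mx_X.
  by rewrite /B /Bmx -!mul_scalar_mx.
have hBv : forall i j, (bp i).[lam j] = if i == j then -1 else 1.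
  by move=> i j; rewrite -hval /bp !hornerE; ring.
have [cc [cn0 csz cA]] := @cubic_ann F A hSH.
have ann := @annih F A lam cc hchar inj cn0 csz cA.
have BB : forall i, B i *m B i = 1%:M.
  move=> i; apply/eqP; rewrite -subr_eq0; apply/eqP.
  change (B i * B i - 1 = 0).
  rewrite -!hB -rmorphM -(rmorph1 (horner_mx A)) -rmorphB; apply: ann.
  by move=> j; rewrite hornerD hornerN hornerM hBv !hornerE; case: (i == j); ring.
have Boff : forall i j, i != j -> (1%:M - B i) *m (1%:M - B j) = 0.
  move=> i j hij.
  change ((1 - B i) * (1 - B j) = 0).
  rewrite -!hB -(rmorph1 (horner_mx A)) -!rmorphB -rmorphM; apply: ann => k.
  rewrite hornerM !hornerD !hornerN hBv hBv !hornerE.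
  case: (i =P k) => [eik|nik]; case: (j =P k) => [ejk|njk] /=; try ring.
  by move: hij; rewrite eik ejk eqxx.
have Bsum : B 0 + B 1 + B 2 = 1%:M.
  apply/eqP; rewrite -subr_eq0; apply/eqP.
  change (B 0 + B 1 + B 2 - 1 = 0).
  rewrite -!hB -(rmorph1 (horner_mx A)) -!rmorphD -rmorphB; apply: ann => k.
  have -> : (bp 0 + bp 1 + bp 2 - 1).[lam k] = (bp 0).[lam k] + (bp 1).[lam k] + (bp 2).[lam k] - 1.
    by rewrite !hornerE.
  rewrite !hBv.
  by case: k => [[|[|[|k]]] Hk] //=; ring.
split.
  move=> x; rewrite /q /qq /p0 -!mulrDr -!mxtraceD -!mulmxDl -!linearD /=.
  by rewrite Bsum trmx1 mul1mx.
move=> eps x heps s0 s1 s2 s3 P0 Q1 Q2 Q3 hs.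
have AJ : A *m Jmx = Jmx *m A^T.
  have e : A *m Jmx = - (Jmx *m Jmx *m A *m Jmx) by rewrite JJ' mulNmx mul1mx mulNmx opprK.
  rewrite e -(mulmxA Jmx Jmx) -hSH !mulmxA -(mulmxA _ Jmx Jmx) JJ' mulmxN mulmx1 opprK.
  by [].
set H := hess c x.
set N := H *m Jmx.
have Hs : H^T = H by rewrite /H hess_sym.
have AN : A *m N = N *m A.
  by rewrite /N mulmxA hHess -mulmxA hSH mulmxA.
have BN : forall i, B i *m N = N *m B i.
  move=> i; rewrite /B /Bmx !mulmxDl !mulmxDr -!scalemxAl -!scalemxAr scalar_mxC.
  by rewrite -mulmxA AN mulmxA AN !mulmxA.
have BT : forall i, (B i)^T *m Jmx = Jmx *m B i.
  move=> i; rewrite /B /Bmx !linearD !linearZ /= tr_scalar_mx trmx_mul.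
  rewrite !mulmxDl -!scalemxAl ?mulmxDr -?scalemxAr scalar_mxC.
  by rewrite -(mulmxA A^T A^T) !hSH mulmxA hSH -mulmxA.
pose pi i := hpi (B i).
have pidem : forall i, pi i *m pi i = pi i by move=> i; apply: L1.
have porth : forall i j, i != j -> pi i *m pi j = 0 by move=> i j hij; apply/L2/Boff.
have psum : pi 0 + pi 1 + pi 2 = 1%:M by apply: L3.
have eB : forall i, B i = 1%:M - 2 *: pi i by move=> i; apply: L4.
have pT : forall i, (pi i)^T *m Jmx = Jmx *m pi i by move=> i; apply/L5/BT.
have pN : forall i, N *m pi i = pi i *m N by move=> i; apply/L6/BN.
have ptr : forall i, \tr (N *m pi i) = 0.
  move=> i; apply: neg_self; apply/esym.
  rewrite -{1}mxtrace_tr trmx_mul /N trmx_mul Hs Jt' mulNmx mulmxN raddfN /=.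
  by rewrite mulmxA pT mxtrace_mulC mulmxA.
have pne0 : forall k, pi k != 0.
  move=> k.
  have rk : root (char_poly A) (lam k).
    rewrite hchar /root horner_prod; apply/prodf_eq0; exists k => //.
    by rewrite horner_exp hornerXsubC subrr expr0n.
  rewrite -eigenvalue_root_char in rk; case/eigenvalueP: rk => v hv vn0.
  have vB : v *m B k = - v.
    rewrite /B /Bmx !mulmxDr mul_mx_scalar -!scalemxAr hv mulmxA hv -scalemxAl hv !scalerA -!scalerDl.
    by rewrite -mulrA -expr2 hval eqxx scaleN1r.
  have vpi : v *m pi k = v.
    rewrite /pi /hpi -scalemxAr mulmxBr mulmx1 vB opprK -mulr2n -scaler_nat scalerA mulVf ?scale1r //.
    by rewrite pnatr_eq0.
  apply/negP => /eqP p0; move: vn0; by rewrite -vpi p0 mulmx0 eqxx.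
have ord3 : forall i : 'I_3, [\/ i = (0 : 'I_3), i = (1 : 'I_3) | i = (2 : 'I_3)].
  by case=> [[|[|[|i]]] Hi] //; [apply: Or31|apply: Or32|apply: Or33]; apply/val_inj.
have prank : forall i, \rank (pi i) = 2%N.
  have ht : forall i, \tr (pi i) = (\rank (pi i))%:R by move=> i; apply: tr_idem.
  have hsum : (\rank (pi (0%R:'I_3)) + \rank (pi (1%R:'I_3)) + \rank (pi (2%R:'I_3)))%N = 6%N.
    by apply/eqP; rewrite -(eqr_nat F) !natrD -!ht -!mxtraceD psum mxtrace1.
  have hev : forall i, ~~ odd (\rank (pi i)) by move=> i; apply: even_rank (pidem i) JJ' Jt' (pT i).
  have hpos : forall i, (0 < \rank (pi i))%N by move=> i; rewrite lt0n mxrank_eq0 pne0.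
  have dbl : forall i, \rank (pi i) = ((\rank (pi i))./2 + (\rank (pi i))./2)%N.
    by move=> i; rewrite addnn -{1}(odd_double_half (\rank (pi i))) (negbTE (hev i)).
  suff [e0' e1' e2'] : [/\ \rank (pi 0) = 2%N, \rank (pi 1) = 2%N & \rank (pi 2) = 2%N].
    by move=> i; case: (ord3 i) => ->.
  move: (hpos 0) (hpos 1) (hpos 2) hsum (dbl 0) (dbl 1) (dbl 2).
  move: (\rank (pi 0)) (\rank (pi 1)) (\rank (pi 2)) => r0 r1 r2.
  move: (r0./2) (r1./2) (r2./2) => k0 k1 k2 h0 h1 h2 hs' e0 e1 e2.
  by split; lia.
pose T i := \tr (N *m N *m pi i).
have NNpi : forall i, N *m N *m pi i = (2^-1 * T i) *: pi i.
  by move=> i; apply: rank2 (pidem i) (prank i) (pN i) (ptr i).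
have hq0 : forall i, q i x = 8^-1 * \tr (B i *m (N *m N)).
  by move=> i; rewrite /q /qq /f0' /N /H !mulmxA BT -!mulmxA mxtrace_mulC !mulmxA.
have trNN : \tr (N *m N) = T 0 + T 1 + T 2.
  by rewrite -[N *m N]mulmx1 -psum !mulmxDr !mxtraceD.
have hq : forall i, q i x = 8^-1 * (T 0 + T 1 + T 2 - 2 * T i).
  move=> i; rewrite hq0 eB mulmxBl mul1mx -scalemxAl raddfB /= mxtraceZ trNN.
  by rewrite mxtrace_mulC.
have h8 : (8 : F) != 0 by rewrite pnatr_eq0.
have es1 : s1 = 1 - eps ^+ 2 * (2^-1 * T 0) by rewrite /s1 !hq; field.
have es2 : s2 = 1 - eps ^+ 2 * (2^-1 * T 1) by rewrite /s2 !hq; field.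
have es3 : s3 = 1 - eps ^+ 2 * (2^-1 * T 2) by rewrite /s3 !hq; field.
have [sn1 sn2 sn3] : [/\ s1 != 0, s2 != 0 & s3 != 0].
  by move: hs; rewrite !mulf_eq0 !negb_or => /andP [/andP [-> ->] ->].
have [c0 c1 c2] := scal heps sn1 sn2 sn3.
rewrite {1}es1 in c0; rewrite {1}es2 in c1; rewrite {1}es3 in c2.
have hNN : N *m N = (2^-1 * T 0) *: pi 0 + (2^-1 * T 1) *: pi 1 + (2^-1 * T 2) *: pi 2.
  by rewrite -[N *m N]mulmx1 -psum !mulmxDr; congr (_ + _ + _); apply: NNpi.
have hPX : Pimx c eps x *m
   (- (P0 *: Jmx)
       - eps ^+ 2 *: (Q1 *: (B 0 *m Jmx) + Q2 *: (B 1 *m Jmx) + Q3 *: (B 2 *m Jmx))) = 1%:M.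
  rewrite /Pimx /f0'.
  have -> : Jmx *m hess c x *m (Jmx *m hess c x) *m Jmx = Jmx *m (N *m N) by rewrite /N /H !mulmxA.
  apply: (final_alg (pidem 0) (pidem 1) (pidem 2)) => //; try exact: porth.
  exact: hNN. exact: c0. exact: c1. exact: c2.
have [Pu _] := mulmx1_unit hPX.
split => //.
by apply/esym; rewrite -[LHS](mulKmx Pu) hPX mulmx1.
Qed.
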